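(* For every positive integer $n$ there are vectors $v,w\in E_8$ with $\langle v,v\rangle=\langle w,w\rangle=2n$ and $\langle v,w\rangle=2n-1$.
   Context: $E_8$ denotes the unique even unimodular positive definite lattice of rank $8$, with bilinear form $\langle\cdot,\cdot\rangle$. *)

(* Defs.v *)
From HB Require Import structures.
From mathcomp Require Import all_boot all_order all_algebra.
Set Implicit Arguments. Unset Strict Implicit. Unset Printing Implicit Defensive.
Import Order.TTheory GRing.Theory Num.Theory.
Local Open Scope ring_scope.

Definition E8_form (v w : 'rV[rat]_8) : rat := \sum_(i < 8) v ord0 i * w ord0 i.

Definition in_E8 (v : 'rV[rat]_8) : Prop :=
  ((forall i, v ord0 i \is a Num.int) \/
   (forall i, v ord0 i - 2^-1 \is a Num.int)) /\
  ((\sum_(i < 8) v ord0 i) / 2 \is a Num.int).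

(* Main.v *)
Require Import Defs.
From mathcomp Require Import all_boot all_order all_algebra.
From mathcomp Require Import zify.
Set Implicit Arguments. Unset Strict Implicit.
Lemma dvd_small d a : d %| a -> a < d -> a = 0.
Proof.
move=> H Ha; case: a H Ha => // a H Ha.
have := dvdn_leq (isT : 0 < a.+1) H. lia.
Qed.

Lemma sq_inj p x x' : prime p -> x <= p./2 -> x' <= p./2 ->
  x * x %% p = x' * x' %% p -> x = x'.
Proof.
move=> pp.
wlog le: x x' / x' <= x.
  move=> W hx hx' E; case: (leqP x' x) => h; first exact: W.
  by symmetry; apply: W => //; lia.
move=> hx hx' /eqP E.
have p1 := prime_gt1 pp.
have : p %| x * x - x' * x'.
  rewrite -eqn_mod_dvd; first exact: E.
  exact: leq_mul.
have -> : x * x - x' * x' = (x - x') * (x + x') by nia.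
rewrite Euclid_dvdM // => /orP [] H.
  have := dvd_small H; lia.
have := dvd_small H. have: p./2 * 2 <= p by lia. lia.
Qed.

Lemma sq_pigeon (p : nat) : prime p ->
  exists x y k, [/\ x <= p./2, y <= p./2 & x*x + y*y + 1 = k * p].
Proof.
move=> pp; have p0 := prime_gt0 pp.
pose h := (p./2).+1.
have lf (x : 'I_h) : x * x %% p < p by rewrite ltn_pmod.
have lg (x : 'I_h) : p - 1 - x * x %% p < p by lia.
pose f (x : 'I_h) : 'I_p := Ordinal (lf x).
pose g (x : 'I_h) : 'I_p := Ordinal (lg x).
have hx (x : 'I_h) : x <= p./2 by have := ltn_ord x.
have fi : injective f.
  move=> a b /(congr1 val) /= E; apply: val_inj; exact: sq_inj pp (hx a) (hx b) E.
have gi : injective g.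
  move=> a b /(congr1 val) /= E; apply: val_inj; apply: sq_inj pp (hx a) (hx b) _.
  have := lf a; have := lf b; lia.
have cA : #|f @: setT| = h by rewrite card_imset // cardsT card_ord.
have cB : #|g @: setT| = h by rewrite card_imset // cardsT card_ord.
have cU := cardsU (f @: setT) (g @: setT).
have mU := max_card (f @: setT :|: g @: setT).
rewrite card_ord in mU.
have : 0 < #|f @: setT :&: g @: setT|.
  lia.
rewrite card_gt0 => /set0Pn [z]; rewrite inE => /andP [/imsetP [x _ ->] /imsetP [y _ E]].
move/(congr1 val): E => /= E.
exists x, y, (x * x %/ p + y * y %/ p + 1); split => //; try exact: hx.
have e1 := divn_eq (x*x) p; have e2 := divn_eq (y*y) p.
have := lf y. move: e1 e2 E.
set a := x*x %/ p; set b := y * y %/ p; set c := y*y %% p; set d := x*x %% p.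
move=> e1 e2 E hc. rewrite {1}e1 {1}e2 E. rewrite !mulnDl mul1n. lia.
Qed.
From Stdlib Require Import ZArith Znumtheory.
Unset Implicit Arguments.
Section ZPart.
Local Open Scope Z_scope.
Definition S4 (n : Z) := exists a b c d : Z, n = a * a+b * b+c * c+d * d.

Lemma euler_S4 a b : S4 a -> S4 b -> S4 (a * b).
Proof.
intros [x1 [x2 [x3 [x4 ->]]]] [y1 [y2 [y3 [y4 ->]]]].
exists (x1 * y1 + x2 * y2 + x3 * y3 + x4 * y4), (x1 * y2 - x2 * y1 + x3 * y4 - x4 * y3),
  (x1 * y3 - x3 * y1 + x4 * y2 - x2 * y4), (x1 * y4 - x4 * y1 + x2 * y3 - x3 * y2).
ring.
Qed.

Lemma pair2 x1 x2 k1 k2 e : x1 = 2 * k1+e -> x2 = 2 * k2+e ->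
  x1 * x1+x2 * x2 = 2 * ((k1+k2+e) * (k1+k2+e) + (k1-k2) * (k1-k2)).
Proof. intros -> ->; ring. Qed.

Lemma par x : exists k e, x = 2 * k+e /\ 0 <= e <= 1.
Proof.
exists (x / 2), (x mod 2). split. apply Z.div_mod; lia.
pose proof (Z.mod_pos_bound x 2); lia.
Qed.

Lemma even_case p t x1 x2 x3 x4 : 1 <= t -> 2 * t * p = x1 * x1+x2 * x2+x3 * x3+x4 * x4 ->
  S4 (t * p).
Proof.
intros ht H.
destruct (par x1) as [k1 [e1 [E1 B1]]].
destruct (par x2) as [k2 [e2 [E2 B2]]].
destruct (par x3) as [k3 [e3 [E3 B3]]].
destruct (par x4) as [k4 [e4 [E4 B4]]].
assert (Hs : exists j, e1+e2+e3+e4 = 2 * j).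
{ exists (t * p - 2 * (k1 * k1+k1 * e1+k2 * k2+k2 * e2+k3 * k3+k3 * e3+k4 * k4+k4 * e4)).
  assert (e1 * e1 = e1) by nia. assert (e2 * e2 = e2) by nia.
  assert (e3 * e3 = e3) by nia. assert (e4 * e4 = e4) by nia.
  assert (x1 * x1 = 2 * (2 * k1 * k1+2 * k1 * e1) + e1 * e1) by (subst; ring).
  assert (x2 * x2 = 2 * (2 * k2 * k2+2 * k2 * e2) + e2 * e2) by (subst; ring).
  assert (x3 * x3 = 2 * (2 * k3 * k3+2 * k3 * e3) + e3 * e3) by (subst; ring).
  assert (x4 * x4 = 2 * (2 * k4 * k4+2 * k4 * e4) + e4 * e4) by (subst; ring).
  lia. }
destruct Hs as [j Hj].
assert (C : (e1 = e2 /\ e3 = e4) \/ (e1 = e3 /\ e2 = e4) \/ (e1 = e4 /\ e2 = e3)) by lia.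
destruct C as [[A B]|[[A B]|[A B]]].
- subst e2 e4.
  pose proof (pair2 x1 x2 k1 k2 e1 E1 E2). pose proof (pair2 x3 x4 k3 k4 e3 E3 E4).
  exists (k1+k2+e1), (k1-k2), (k3+k4+e3), (k3-k4). lia.
- subst e3 e4.
  pose proof (pair2 x1 x3 k1 k3 e1 E1 E3). pose proof (pair2 x2 x4 k2 k4 e2 E2 E4).
  exists (k1+k3+e1), (k1-k3), (k2+k4+e2), (k2-k4). lia.
- subst e4 e3.
  pose proof (pair2 x1 x4 k1 k4 e1 E1 E4). pose proof (pair2 x2 x3 k2 k3 e2 E2 E3).
  exists (k1+k4+e1), (k1-k4), (k2+k3+e2), (k2-k3). lia.
Qed.

Lemma red m h x : m = 2 * h+1 -> 0 <= h -> exists q y, x = m * q + y /\ -h <= y <= h.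
Proof.
intros Hm Hh.
exists ((x+h)/m), ((x+h) mod m - h).
pose proof (Z.div_mod (x+h) m ltac:(lia)).
pose proof (Z.mod_pos_bound (x+h) m ltac:(lia)).
split; lia.
Qed.

Lemma odd_case p m h x1 x2 x3 x4 : (forall d, 1 < d < p -> ~ (d | p)) ->
  m = 2 * h+1 -> 1 <= h -> m < p ->
  m * p = x1 * x1+x2 * x2+x3 * x3+x4 * x4 ->
  exists r, 1 <= r < m /\ S4 (r * p).
Proof.
intros Hp Hm Hh Hmp H.
destruct (red m h x1 Hm ltac:(lia)) as [q1 [y1 [E1 B1]]].
destruct (red m h x2 Hm ltac:(lia)) as [q2 [y2 [E2 B2]]].
destruct (red m h x3 Hm ltac:(lia)) as [q3 [y3 [E3 B3]]].
destruct (red m h x4 Hm ltac:(lia)) as [q4 [y4 [E4 B4]]].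
set (r := p - (2 * y1 * q1 + m * q1 * q1 + 2 * y2 * q2 + m * q2 * q2 + 2 * y3 * q3 + m * q3 * q3 + 2 * y4 * q4 + m * q4 * q4)).
assert (Hr : m * r = y1 * y1+y2 * y2+y3 * y3+y4 * y4).
{ unfold r. rewrite Z.mul_sub_distr_l H. subst x1 x2 x3 x4. ring. }
assert (y1 * y1 <= h * h) by nia. assert (y2 * y2 <= h * h) by nia.
assert (y3 * y3 <= h * h) by nia. assert (y4 * y4 <= h * h) by nia.
pose proof (Z.square_nonneg y1). pose proof (Z.square_nonneg y2).
pose proof (Z.square_nonneg y3). pose proof (Z.square_nonneg y4).
assert (Hr1 : r < m).
{ destruct (Z.lt_ge_cases r m) as [|G]; [assumption|].
  assert (m * m <= m * r) by (apply Z.mul_le_mono_nonneg_l; lia).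
  assert (m * m = 4 * (h * h)+4 * h+1) by (subst; ring). lia. }
assert (Hr0 : 0 <= r).
{ destruct (Z.lt_ge_cases r 0) as [G|]; [|assumption].
  assert (m * r < 0) by (apply Z.mul_pos_neg; lia). lia. }
assert (Hr2 : r <> 0).
{ intro R0. rewrite R0 in Hr.
  assert (y1 * y1 = 0) by lia. assert (y2 * y2 = 0) by lia.
  assert (y3 * y3 = 0) by lia. assert (y4 * y4 = 0) by lia.
  assert (y1 = 0) by (destruct (proj1 (Z.eq_mul_0 y1 y1) ltac:(assumption)); assumption). assert (y2 = 0) by (destruct (proj1 (Z.eq_mul_0 y2 y2) ltac:(assumption)); assumption). assert (y3 = 0) by (destruct (proj1 (Z.eq_mul_0 y3 y3) ltac:(assumption)); assumption). assert (y4 = 0) by (destruct (proj1 (Z.eq_mul_0 y4 y4) ltac:(assumption)); assumption).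
  apply (Hp m). lia.
  exists (q1 * q1+q2 * q2+q3 * q3+q4 * q4).
  apply Z.mul_reg_l with m. lia. rewrite H. subst. ring. }
exists r. split. lia.
set (S := q1 * y1+q2 * y2+q3 * y3+q4 * y4).
exists (r + S), (q1 * y2 - q2 * y1 + q3 * y4 - q4 * y3),
  (q1 * y3 - q3 * y1 + q4 * y2 - q2 * y4), (q1 * y4 - q4 * y1 + q2 * y3 - q3 * y2).
set (w2 := q1 * y2 - q2 * y1 + q3 * y4 - q4 * y3).
set (w3 := q1 * y3 - q3 * y1 + q4 * y2 - q2 * y4).
set (w4 := q1 * y4 - q4 * y1 + q2 * y3 - q3 * y2).
assert (K : m * m * (r * p) = m * m * ((r+S) * (r+S)+w2 * w2+w3 * w3+w4 * w4)).
{ replace (m * m * (r * p)) with ((m * p) * (m * r)) by ring.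
  replace (m * m * ((r+S) * (r+S)+w2 * w2+w3 * w3+w4 * w4)) with
    ((m * r + m * S) * (m * r+m * S) + (m * w2) * (m * w2) + (m * w3) * (m * w3) + (m * w4) * (m * w4)) by ring.
  rewrite H Hr. unfold S, w2, w3, w4. subst x1 x2 x3 x4. ring. }
apply Z.mul_reg_l with (m * m). intro Z0. apply Z.eq_mul_0 in Z0; lia. exact K.
Qed.
Lemma descent p : (forall d, 1 < d < p -> ~ (d | p)) ->
  forall k : nat, forall m, 1 <= m <= Z.of_nat k -> m < p -> S4 (m * p) -> S4 p.
Proof.
intros Hp k; induction k as [|k IH]; intros m Hm Hmp HS.
- lia.
- destruct (Z.eq_dec m 1) as [->|Hne].
  + now rewrite Z.mul_1_l in HS.
  + destruct HS as [x1 [x2 [x3 [x4 H]]]].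
    destruct (par m) as [t [e [Et Be]]].
    destruct (Z.eq_dec e 0) as [E0|E0].
    * subst e. apply (IH t). lia. lia.
      apply (even_case p t x1 x2 x3 x4). lia. rewrite -H. rewrite Et. ring.
    * assert (e = 1) by lia. subst e.
      destruct (odd_case p m t x1 x2 x3 x4 Hp ltac:(lia) ltac:(lia) Hmp H) as [r [Hr HS]].
      apply (IH r). lia. lia. exact HS.
Qed.

Lemma primeZ p s x y k : (forall d, 1 < d < p -> ~ (d | p)) -> p = 2 * s+1 -> 1 <= s ->
  0 <= x <= s -> 0 <= y <= s -> x * x+y * y+1 = k * p -> S4 p.
Proof.
intros Hp Ep Hs1 Hx Hy H.
assert (x * x <= s * s) by nia. assert (y * y <= s * s) by nia.
pose proof (Z.square_nonneg x). pose proof (Z.square_nonneg y).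
assert (0 <= s) by lia.
assert (Hk1 : 1 <= k).
{ destruct (Z.lt_ge_cases k 1) as [G|]; [|assumption].
  assert (k * p <= 0) by (apply Z.mul_nonpos_nonneg; lia). lia. }
assert (Hk2 : k < p).
{ destruct (Z.lt_ge_cases k p) as [|G]; [assumption|].
  assert (p * p <= k * p) by (apply Z.mul_le_mono_nonneg_r; lia).
  assert (p * p = 4 * (s * s)+4 * s+1) by (rewrite Ep; ring). lia. }
apply (descent p Hp (Z.to_nat k) k). lia. exact Hk2.
exists x, y, 1, 0. rewrite -H. ring.
Qed.
End ZPart.
Set Implicit Arguments.
Local Close Scope Z_scope.
Local Open Scope nat_scope.

Lemma nodivZ (p : nat) : prime.prime p -> forall d : Z,
  (1 < d < Z.of_nat p)%Z -> ~ (d | Z.of_nat p)%Z.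
Proof.
move=> pp d Hd [k Hk].
have kp : (0 < k)%Z by nia.
have : Z.to_nat d %| p.
  apply/dvdnP; exists (Z.to_nat k). nia.
case/primeP: pp => _ H /H /orP [] /eqP; lia.
Qed.

Lemma primeS4 (p : nat) : prime.prime p -> S4 (Z.of_nat p).
Proof.
move=> pp; case: (even_prime pp) => [->|op].
  by exists 1%Z, 1%Z, 0%Z, 0%Z.
have [x [y [k [hx hy E]]]] := sq_pigeon pp.
have ep := odd_double_half p; rewrite op in ep.
apply: (@primeZ _ (Z.of_nat p./2) (Z.of_nat x) (Z.of_nat y) (Z.of_nat k)).
- exact: nodivZ.
- lia.
- have := prime_gt1 pp; lia.
- lia.
- lia.
- lia.
Qed.

Lemma natS4 (n : nat) : S4 (Z.of_nat n).
Proof.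
suff HH : forall N m, m < N -> S4 (Z.of_nat m) by exact: (HH n.+1 n (ltnSn n)).
clear n; elim=> // N IH n hn.
case: (leqP n 1) => h1.
  case: n {hn IH} h1 => [|[|//]] _; [by exists 0%Z, 0%Z, 0%Z, 0%Z | by exists 1%Z, 0%Z, 0%Z, 0%Z].
have pd := pdiv_prime h1.
have pg := prime_gt1 pd.
have E := divnK (pdiv_dvd n).
have lt := ltn_Pdiv pg (ltnW h1).
have -> : Z.of_nat n = (Z.of_nat (n %/ pdiv n) * Z.of_nat (pdiv n))%Z.
  rewrite -[in LHS]E; lia.
apply: euler_S4; last exact: primeS4.
apply: IH; lia.
Qed.

Lemma natS4' (n : nat) : exists a b c d : nat, n = a*a + b*b + c*c + d*d.
Proof.
have [a [b [c [d E]]]] := natS4 n.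
exists (Z.abs_nat a), (Z.abs_nat b), (Z.abs_nat c), (Z.abs_nat d).
apply: Nat2Z.inj. rewrite E. lia.
Qed.

Local Open Scope ring_scope.
Import GRing.Theory Num.Theory.

Definition nrow (s : seq nat) : 'rV[rat]_8 := \row_(i < 8) ((nth 0%nat s i)%:R).

Lemma form_nrow s t : E8_form (nrow s) (nrow t) =
  (\sum_(i < 8) (nth 0%nat s i * nth 0%nat t i)%nat)%:R.
Proof.
rewrite /E8_form natr_sum; apply: eq_bigr => i _; by rewrite !mxE natrM.
Qed.

Lemma in_E8_nrow s : ~~ odd (\sum_(i < 8) nth 0%nat s i) -> in_E8 (nrow s).
Proof.
move=> ev; split; first by left => i; rewrite mxE.
have -> : \sum_(i < 8) nrow s ord0 i = (\sum_(i < 8) nth 0%nat s i)%:R.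
  rewrite natr_sum; apply: eq_bigr => i _; by rewrite mxE.
have := odd_double_half (\sum_(i < 8) nth 0%nat s i).
rewrite (negbTE ev) add0n => <-.
rewrite -muln2 natrM mulfK //.
Qed.

Theorem lemma2p2 (n : nat) (hn : (0 < n)%nat) :
  exists v w : 'rV[rat]_8,
    [/\ in_E8 v, in_E8 w,
        E8_form v v = (2 * n)%:R,
        E8_form w w = (2 * n)%:R &
        E8_form v w = (2 * n)%:R - 1].
Proof.
have [a [b [c [d E]]]] := natS4' (2 * n - 1).
exists (nrow [:: a; b; c; d; 1%nat; 0%nat; 0%nat; 0%nat]),
       (nrow [:: a; b; c; d; 0%nat; 1%nat; 0%nat; 0%nat]).
have Hsum : ~~ odd (a + b + c + d + 1).
  have H2 : (a*a + b*b + c*c + d*d + 1 = 2*n)%nat by lia.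
  have : ~~ odd (a*a + b*b + c*c + d*d + 1) by rewrite H2 oddM.
  by rewrite !oddD !oddM !andbb.
split.
- apply: in_E8_nrow. rewrite !big_ord_recl big_ord0 /=.
  move: Hsum; rewrite /bump /= => h.
  have -> : (a + (b + (c + (d + (1 + (0 + (0 + (0 + 0))))))) = a+b+c+d+1)%nat by lia.
  exact: h.
- apply: in_E8_nrow. rewrite !big_ord_recl big_ord0 /=.
  move: Hsum; rewrite /bump /= => h.
  have -> : (a + (b + (c + (d + (0 + (1 + (0 + (0 + 0))))))) = a+b+c+d+1)%nat by lia.
  exact: h.
- rewrite form_nrow !big_ord_recl big_ord0 /= /bump /=. congr (_%:R). lia.
- rewrite form_nrow !big_ord_recl big_ord0 /= /bump /=. congr (_%:R). lia.
- have -> : (2*n)%:R - 1 = (2*n - 1)%:R :> rat.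
    by rewrite natrB //; lia.
  rewrite form_nrow !big_ord_recl big_ord0 /= /bump /=. congr (_%:R). lia.
Qed.
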